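(* Let $H_1,H_2$ be linear subspaces of $\mathbb{R}^n$. The primitive quartics $h_{4,H_1}$ and $h_{4,H_2}$ are congruent if and only if either $\dim H_1=\dim H_2$ or $\dim H_1=n-\dim H_2$.
   Context: $\mathbb{R}^n$ carries the standard Euclidean inner product and norm $|\cdot|$. For a linear subspace $H\subseteq\mathbb{R}^n$, write $\xi,\eta$ for the orthogonal projections of $x$ onto $H$ and $H^\perp$, and set $h_{4,H}(x)=|\xi|^4-6|\xi|^2|\eta|^2+|\eta|^4$. Two polynomials $f_1,f_2$ on $\mathbb{R}^n$ are congruent if there is an orthogonal transformation $U\in O(n)$ and $\epsilon\in\{1,-1\}$ with $f_2(x)=\epsilon f_1(Ux)$ for all $x$. *)

(* Defs.v *)
From mathcomp Require Import all_boot all_order all_algebra.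
From mathcomp Require Import reals.
Set Implicit Arguments. Unset Strict Implicit. Unset Printing Implicit Defensive.
Import Order.TTheory GRing.Theory Num.Theory.
Local Open Scope ring_scope.

(* Points of R^n are row vectors 'rV[R]_n; a linear subspace H of R^n is
   represented by a square matrix whose row space is H (mxalgebra);
   its dimension is \rank H. *)

Definition sqnorm (R : realType) (n : nat) (x : 'rV[R]_n) : R :=
  \sum_(i < n) x 0 i ^+ 2.

Definition ortho_compl (R : realType) (n : nat) (H : 'M[R]_n) : 'M[R]_n :=
  kermx H^T.

Definition oproj (R : realType) (n : nat) (H : 'M[R]_n) (x : 'rV[R]_n) : 'rV[R]_n :=
  x *m proj_mx H (ortho_compl H).

Definition h4 (R : realType) (n : nat) (H : 'M[R]_n) (x : 'rV[R]_n) : R :=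
  let a := sqnorm (oproj H x) in
  let b := sqnorm (oproj (ortho_compl H) x) in
  a ^+ 2 - 6 * a * b + b ^+ 2.

Definition orthogonal_mx (R : realType) (n : nat) (U : 'M[R]_n) : Prop :=
  U *m U^T = 1%:M.

Definition congruent (R : realType) (n : nat) (f1 f2 : 'rV[R]_n -> R) : Prop :=
  exists (U : 'M[R]_n) (eps : R),
    orthogonal_mx U /\ (eps = 1 \/ eps = -1) /\
    forall x : 'rV[R]_n, f2 x = eps * f1 (x *m U).

(* Main.v *)
Require Import Defs.
From mathcomp Require Import all_boot all_order all_algebra.
From mathcomp Require Import reals.
From mathcomp Require Import ring lra zify.
Set Implicit Arguments. Unset Strict Implicit. Unset Printing Implicit Defensive.
Import Order.TTheory GRing.Theory Num.Theory.
Local Open Scope ring_scope.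

Lemma sqnormE (R : realType) n (x : 'rV[R]_n) : sqnorm x = (x *m x^T) 0 0.
Proof. by rewrite /sqnorm !mxE; apply: eq_bigr => i _; rewrite !mxE expr2. Qed.

Lemma sqnorm_ge0 (R : realType) n (x : 'rV[R]_n) : 0 <= sqnorm x.
Proof. by apply: sumr_ge0 => i _; apply: sqr_ge0. Qed.

Lemma mulmxtr_eq0 (R : realType) m n (A : 'M[R]_(m, n)) : A *m A^T = 0 -> A = 0.
Proof.
move=> h; apply/matrixP => i j; rewrite mxE.
have := congr1 (fun M : 'M[R]_m => M i i) h; rewrite !mxE => hs.
have hn : forall k, predT k -> 0 <= A i k * A^T k i.
  by move=> k _; rewrite mxE -expr2 sqr_ge0.
have := @psumr_eq0P _ _ _ _ hn hs j isT.
by rewrite mxE -expr2 => /eqP; rewrite sqrf_eq0 => /eqP.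
Qed.

Lemma sqnorm_eq0 (R : realType) n (x : 'rV[R]_n) : sqnorm x = 0 -> x = 0.
Proof.
move=> h; apply: mulmxtr_eq0; apply/matrixP => i j.
by rewrite !ord1 -sqnormE h mxE.
Qed.

Lemma orth0 (R : realType) n m p q (H : 'M[R]_(q, n)) (A : 'M[R]_(m, n)) (B : 'M[R]_(p, n)) :
  (A <= H)%MS -> (B <= kermx H^T)%MS -> A *m B^T = 0.
Proof.
move=> /submxP [D ->] /submxP [E ->].
by rewrite trmx_mul -mulmxA (mulmxA H) -[H *m _]trmxK trmx_mul trmxK mulmx_ker
  trmx0 mul0mx mulmx0.
Qed.

Lemma cap_ortho (R : realType) n q (H : 'M[R]_(q, n)) : (H :&: kermx H^T)%MS = 0.
Proof.
apply: mulmxtr_eq0; apply: (orth0 (H := H)); first exact: capmxSl.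
exact: capmxSr.
Qed.

Lemma sub_kk (R : realType) n m (H : 'M[R]_n) (A : 'M[R]_(m, n)) :
  (A <= H)%MS -> (A <= kermx (kermx H^T)^T)%MS.
Proof.
move=> /submxP [D ->]; apply/sub_kermxP.
by rewrite -mulmxA -[H *m _]trmxK trmx_mul trmxK mulmx_ker trmx0 mulmx0.
Qed.

Lemma full_ortho (R : realType) n q (H : 'M[R]_(q, n)) : row_full (H + kermx H^T)%MS.
Proof.
rewrite /row_full; apply/eqP.
have := mxrank_sum_cap H (kermx H^T).
rewrite cap_ortho mxrank0 addn0 mxrank_ker mxrank_tr => ->.
by rewrite subnKC // rank_leq_col.
Qed.

Lemma oproj_uniq (R : realType) n (H : 'M[R]_n) (u v : 'rV[R]_n) :
  (u <= H)%MS -> (v <= kermx H^T)%MS -> oproj H (u + v) = u.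
Proof.
move=> hu hv; rewrite /oproj /ortho_compl mulmxDl proj_mx_id ?cap_ortho //.
by rewrite proj_mx_0 ?cap_ortho // addr0.
Qed.

Lemma decomp (R : realType) n (H : 'M[R]_n) (x : 'rV[R]_n) :
  exists u v, [/\ (u <= H)%MS, (v <= kermx H^T)%MS & x = u + v].
Proof.
exists (oproj H x), (x - oproj H x); split.
- exact: proj_mx_sub.
- by apply: proj_mx_compl_sub; apply: submx_full; apply: full_ortho.
- by rewrite addrC subrK.
Qed.

Definition F4 (R : realType) (a b : R) := a ^+ 2 - 6 * a * b + b ^+ 2.

Lemma h4_decomp (R : realType) n (H : 'M[R]_n) (u v : 'rV[R]_n) :
  (u <= H)%MS -> (v <= kermx H^T)%MS -> h4 H (u + v) = F4 (sqnorm u) (sqnorm v).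
Proof.
move=> hu hv; rewrite /h4 oproj_uniq //; congr F4; congr sqnorm.
rewrite addrC /ortho_compl oproj_uniq //; exact: sub_kk.
Qed.

Lemma pythag (R : realType) n (H : 'M[R]_n) (u v : 'rV[R]_n) :
  (u <= H)%MS -> (v <= kermx H^T)%MS -> sqnorm (u + v) = sqnorm u + sqnorm v.
Proof.
move=> hu hv; rewrite !sqnormE linearD /= !mulmxDl !mulmxDr.
have h1 : u *m v^T = 0 by apply: orth0 hu hv.
have h2 : v *m u^T = 0 by rewrite -[v *m _]trmxK trmx_mul trmxK h1 trmx0.
by rewrite h1 h2 addr0 add0r !mxE.
Qed.

Lemma h4_compl (R : realType) n (H : 'M[R]_n) x : h4 (ortho_compl H) x = h4 H x.
Proof.
have [u [v [hu hv ->]]] := decomp H x.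
rewrite /ortho_compl [u + v]addrC h4_decomp //; last exact: sub_kk.
by rewrite addrC h4_decomp // /F4; ring.
Qed.

Lemma sqnorm_mul (R : realType) n (U : 'M[R]_n) x :
  orthogonal_mx U -> sqnorm (x *m U) = sqnorm x.
Proof.
by move=> hU; rewrite !sqnormE trmx_mul mulmxA -(mulmxA x) hU mulmx1.
Qed.

Lemma transport (R : realType) n (H1 H2 U : 'M[R]_n) :
  orthogonal_mx U ->
  (forall x : 'rV_n, (x <= H2)%MS -> (x *m U <= H1)%MS) ->
  (forall x : 'rV_n, (x <= kermx H2^T)%MS -> (x *m U <= kermx H1^T)%MS) ->
  forall x, h4 H2 x = h4 H1 (x *m U).
Proof.
move=> hU h1 h2 x; have [u [v [hu hv ->]]] := decomp H2 x.
rewrite mulmxDl !h4_decomp ?h1 ?h2 //.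
by rewrite !sqnorm_mul.
Qed.

Lemma h4_onH (R : realType) n (H : 'M[R]_n) x : (x <= H)%MS -> h4 H x = sqnorm x ^+ 2.
Proof.
move=> hx; rewrite -[x]addr0 h4_decomp ?sub0mx // /F4.
have -> : sqnorm (0 : 'rV[R]_n) = 0 by rewrite /sqnorm big1 // => i _; rewrite mxE expr0n.
by rewrite addr0; ring.
Qed.

Lemma h4_onHp (R : realType) n (H : 'M[R]_n) x : (x <= kermx H^T)%MS -> h4 H x = sqnorm x ^+ 2.
Proof. by move=> hx; rewrite -h4_compl h4_onH. Qed.

Lemma zplus (R : realType) n (H : 'M[R]_n) x :
  h4 H x = sqnorm x ^+ 2 -> (x <= H)%MS \/ (x <= kermx H^T)%MS.
Proof.
have [u [v [hu hv ->]]] := decomp H x.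
rewrite h4_decomp // (pythag hu hv) /F4.
set a := sqnorm u; set b := sqnorm v => e.
have h8 : 8 * (a * b) = 0.
  have -> : 8 * (a * b) = (a + b) ^+ 2 - (a ^+ 2 - 6 * a * b + b ^+ 2) by ring.
  by rewrite e subrr.
have : a * b = 0 by move/eqP: h8; rewrite mulf_eq0 pnatr_eq0 /= => /eqP.
move/eqP; rewrite mulf_eq0 => /orP [] /eqP /sqnorm_eq0 ->.
  by right; rewrite add0r.
by left; rewrite addr0.
Qed.

Lemma zminus (R : realType) n (H : 'M[R]_n) x :
  h4 H x = - sqnorm x ^+ 2 -> (x <= H)%MS \/ (x <= kermx H^T)%MS -> x = 0.
Proof.
move=> e hx; have e2 : sqnorm x ^+ 2 = - sqnorm x ^+ 2.
  by rewrite -e; case: hx => hx; [rewrite h4_onH | rewrite h4_onHp].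
apply: sqnorm_eq0; apply/eqP.
suff : sqnorm x ^+ 2 == 0 by rewrite expf_eq0.
have : 2 * sqnorm x ^+ 2 = 0.
  have -> : 2 * sqnorm x ^+ 2 = sqnorm x ^+ 2 - (- sqnorm x ^+ 2) by ring.
  by rewrite -e2 subrr.
by move/eqP; rewrite mulf_eq0 pnatr_eq0.
Qed.

Lemma capzero (R : realType) n (A B : 'M[R]_n) :
  (forall y : 'rV_n, (y <= A)%MS -> (y <= B)%MS -> y = 0) -> (\rank A + \rank B <= n)%N.
Proof.
move=> h; have c0 : (A :&: B)%MS = 0.
  apply/row_matrixP => i; rewrite row0; apply: h.
    exact: submx_trans (row_sub i _) (capmxSl _ _).
  exact: submx_trans (row_sub i _) (capmxSr _ _).
have := mxrank_sum_cap A B; rewrite c0 mxrank0 addn0 => <-.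
exact: rank_leq_col.
Qed.

Lemma union_sub (R : realType) n (W A B : 'M[R]_n) :
  (forall y : 'rV_n, (y <= W)%MS -> (y <= A)%MS \/ (y <= B)%MS) ->
  (W <= A)%MS \/ (W <= B)%MS.
Proof.
move=> h; case hA: (W <= A)%MS; first by left.
case hB: (W <= B)%MS; first by right.
move/negbT/row_subPn: hA => [i hi]; move/negbT/row_subPn: hB => [j hj].
have wi : (row i W <= B)%MS by case: (h _ (row_sub i W)) => // hh; rewrite hh in hi.
have wj : (row j W <= A)%MS by case: (h _ (row_sub j W)) => // hh; rewrite hh in hj.
have ws : ((row i W + row j W)%R <= W)%MS by apply: addmx_sub; apply: row_sub.
case: (h _ ws) => hs.
  have : ((row i W + row j W - row j W)%R <= A)%MS.
    by apply: addmx_sub => //; rewrite -scaleN1r; apply: scalemx_sub.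
  by rewrite addrK (negbTE hi).
have : ((row i W + row j W - row i W)%R <= B)%MS.
  by apply: addmx_sub => //; rewrite -scaleN1r; apply: scalemx_sub.
by rewrite addrC addKr (negbTE hj).
Qed.

Lemma rank_mulU (R : realType) n (H U : 'M[R]_n) :
  orthogonal_mx U -> \rank (H *m U) = \rank H.
Proof.
move=> hU; apply: mxrankMfree; rewrite row_free_unit.
by case: (mulmx1_unit hU).
Qed.

Lemma imgU (R : realType) n (H U : 'M[R]_n) (y : 'rV[R]_n) :
  (y <= H *m U)%MS -> exists x, (x <= H)%MS /\ y = x *m U.
Proof.
move/submxP => [D ->]; exists (D *m H); split; first exact: submxMl.
by rewrite mulmxA.
Qed.

Lemma rank_ker (R : realType) n (H : 'M[R]_n) : \rank (kermx H^T) = (n - \rank H)%N.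
Proof. by rewrite mxrank_ker mxrank_tr. Qed.

Lemma neg_lemma (R : realType) n (H1 H2 U : 'M[R]_n) :
  orthogonal_mx U -> (forall x, h4 H2 x = - h4 H1 (x *m U)) ->
  (\rank H2 + \rank H1 <= n)%N /\ (\rank H2 + \rank (kermx H1^T) <= n)%N.
Proof.
move=> hU e.
have key : forall y : 'rV_n, (y <= H2 *m U)%MS -> h4 H1 y = - sqnorm y ^+ 2.
  move=> y /imgU [x [hx ->]]; rewrite sqnorm_mul // -(h4_onH hx) e opprK //.
rewrite -(rank_mulU H2 hU); split; apply: capzero => y hy hy'.
  by apply: (zminus (key _ hy)); left.
by apply: (zminus (key _ hy)); right.
Qed.

Lemma pos_lemma (R : realType) n (H1 H2 U : 'M[R]_n) :
  orthogonal_mx U -> (forall x, h4 H2 x = h4 H1 (x *m U)) ->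
  (\rank H2 <= \rank H1)%N \/ (\rank H2 <= \rank (kermx H1^T))%N.
Proof.
move=> hU e.
have key : forall y : 'rV_n, (y <= H2 *m U)%MS -> (y <= H1)%MS \/ (y <= kermx H1^T)%MS.
  move=> y /imgU [x [hx ->]]; apply: zplus.
  by rewrite sqnorm_mul // -e h4_onH.
rewrite -(rank_mulU H2 hU).
by case: (union_sub key) => h; [left | right]; apply: mxrankS.
Qed.

Lemma orthoT (R : realType) n (U : 'M[R]_n) : orthogonal_mx U -> orthogonal_mx U^T.
Proof. by move=> hU; rewrite /orthogonal_mx trmxK; apply: mulmx1C. Qed.

Lemma mulUUT (R : realType) n (U : 'M[R]_n) (y : 'rV[R]_n) :
  orthogonal_mx U -> y *m U^T *m U = y.
Proof. by move=> hU; rewrite -mulmxA (mulmx1C hU) mulmx1. Qed.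

Lemma necessity (R : realType) (n : nat) (H1 H2 : 'M[R]_n) :
  congruent (h4 H1) (h4 H2) ->
  (\rank H1 = \rank H2 \/ \rank H1 = (n - \rank H2)%N).
Proof.
move=> [U [eps [hU [he e]]]].
have hc2 : forall x, h4 (kermx H2^T) x = eps * h4 H1 (x *m U).
  by move=> x; rewrite -e; exact: h4_compl.
have hUT := orthoT hU.
have k1n := rank_leq_col H1; have k2n := rank_leq_col H2.
have r1 := rank_ker H1; have r2 := rank_ker H2.
case: he => he; subst eps.
- have e' : forall x, h4 H2 x = h4 H1 (x *m U) by move=> x; rewrite e mul1r.
  have c2 : forall x, h4 (kermx H2^T) x = h4 H1 (x *m U) by move=> x; rewrite hc2 mul1r.
  have e1 : forall y, h4 H1 y = h4 H2 (y *m U^T) by move=> y; rewrite e' mulUUT.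
  have c1 : forall y, h4 (kermx H1^T) y = h4 H2 (y *m U^T).
    by move=> y; rewrite -e1; exact: h4_compl.
  have := pos_lemma hU e'; have := pos_lemma hU c2.
  have := pos_lemma hUT e1; have := pos_lemma hUT c1.
  rewrite r1 r2; lia.
- have e' : forall x, h4 H2 x = - h4 H1 (x *m U) by move=> x; rewrite e mulN1r.
  have c2 : forall x, h4 (kermx H2^T) x = - h4 H1 (x *m U) by move=> x; rewrite hc2 mulN1r.
  have := neg_lemma hU e'; have := neg_lemma hU c2.
  rewrite r1 r2; lia.
Qed.

Lemma onb_eq (R : realType) n k (Q : 'M[R]_(k, n)) (H : 'M[R]_n) :
  Q *m Q^T = 1%:M -> (Q <= H)%MS -> \rank H = k -> (Q == H)%MS.
Proof.
move=> hQ hs hr; rewrite -(mxrank_leqif_eq hs).2 hr.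
have h1 := rank_leq_row Q.
have h2 := mxrankM_maxl Q Q^T; rewrite hQ mxrank1 in h2.
by rewrite eqn_leq h1 h2.
Qed.

Lemma onb (R : realType) n k : forall (H : 'M[R]_n), \rank H = k ->
  exists Q : 'M[R]_(k, n), Q *m Q^T = 1%:M /\ (Q == H)%MS.
Proof.
elim: k => [|k IH] H hr.
  have hQ : (0 : 'M[R]_(0, n)) *m (0 : 'M[R]_(0, n))^T = 1%:M by apply/matrixP => [[]].
  by exists 0; split => //; apply: onb_eq => //; rewrite sub0mx.
have [i hi] : exists i, row i H != 0.
  case: (pickP (fun i => row i H != 0)) => [i hi|h0]; first by exists i.
  suff : H = 0 by move=> h; rewrite h mxrank0 in hr.
  by apply/row_matrixP => i; rewrite row0; move: (h0 i) => /negbFE /eqP.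
set v := row i H in hi.
have vH : (v <= H)%MS by exact: row_sub.
set s := sqnorm v.
have s_gt0 : 0 < s.
  rewrite lt_def sqnorm_ge0 andbT; apply/eqP => /sqnorm_eq0 h; by rewrite h eqxx in hi.
set c := (Num.sqrt s)^-1.
set q := c *: v.
have hq : q *m q^T = 1%:M.
  apply/matrixP => a b; rewrite !ord1 linearZ /= -scalemxAl -scalemxAr !mxE.
  have -> : \sum_j v 0 j * v^T j 0 = s by rewrite /s sqnormE mxE.
  rewrite eqxx mulrA -expr2 exprVn sqr_sqrtr ?ltW // mulVf //.
  by rewrite gt_eqF.
set K := kermx v^T.
set H' := (H :&: K)%MS.
have rv : \rank v = 1%N by rewrite rank_rV hi.
have rK : \rank K = (n - 1)%N by rewrite /K mxrank_ker mxrank_tr rv.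
have fHK : \rank (H + K)%MS = n.
  suff : row_full (H + K)%MS by rewrite /row_full => /eqP.
  rewrite -sub1mx; apply: submx_trans (addsmxS vH (submx_refl K)).
  by rewrite sub1mx full_ortho.
have rH' : \rank H' = k.
  have := mxrank_sum_cap H K; rewrite fHK hr rK.
  have := rank_leq_col v; rewrite rv => hn.
  rewrite /H'; lia.
have [Q' [hQ' eQ']] := IH H' rH'.
have Q'K : (Q' <= K)%MS.
  by apply: submx_trans (capmxSr H K); move/andP: eQ' => [].
have Q'H : (Q' <= H)%MS.
  by apply: submx_trans (capmxSl H K); move/andP: eQ' => [].
have qv : (q <= v)%MS by apply: scalemx_sub.
have h0 : q *m Q'^T = 0 by apply: (orth0 (H := v)).
have h0' : Q' *m q^T = 0 by rewrite -[Q' *m _]trmxK trmx_mul trmxK h0 trmx0.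
have hQQ : col_mx q Q' *m (col_mx q Q')^T = 1%:M.
  rewrite tr_col_mx mul_col_row hq h0 h0' hQ'.
  by rewrite [RHS](scalar_mx_block 1%N k).
have sQ : (col_mx q Q' <= H)%MS.
  by rewrite col_mx_sub Q'H andbT; apply: submx_trans qv vH.
exists (col_mx q Q'); split => //.
exact: onb_eq.
Qed.

Lemma same_rank_cong (R : realType) n (H1 H2 : 'M[R]_n) :
  \rank H1 = \rank H2 ->
  exists U, orthogonal_mx U /\ forall x, h4 H2 x = h4 H1 (x *m U).
Proof.
move=> hr; set k := \rank H2.
have [Q1a [o1a e1a]] := onb hr.
have [Q2a [o2a e2a]] := onb (erefl k).
have r1b : \rank (kermx H1^T) = (n - k)%N by rewrite rank_ker hr.
have r2b : \rank (kermx H2^T) = (n - k)%N by rewrite rank_ker.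
have [Q1b [o1b e1b]] := onb r1b.
have [Q2b [o2b e2b]] := onb r2b.
move/andP: e1a => [s1a t1a]; move/andP: e2a => [s2a t2a].
move/andP: e1b => [s1b t1b]; move/andP: e2b => [s2b t2b].
have z1 : Q1a *m Q1b^T = 0 by apply: (orth0 (H := H1)).
have z1' : Q1b *m Q1a^T = 0 by rewrite -[Q1b *m _]trmxK trmx_mul trmxK z1 trmx0.
have z2 : Q2a *m Q2b^T = 0 by apply: (orth0 (H := H2)).
have z2' : Q2b *m Q2a^T = 0 by rewrite -[Q2b *m _]trmxK trmx_mul trmxK z2 trmx0.
set U := Q2a^T *m Q1a + Q2b^T *m Q1b.
have Ua : Q2a *m U = Q1a.
  by rewrite /U mulmxDr !mulmxA o2a z2 mul1mx mul0mx addr0.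
have Ub : Q2b *m U = Q1b.
  by rewrite /U mulmxDr !mulmxA o2b z2' mul1mx mul0mx add0r.
set P := Q2a^T *m Q2a + Q2b^T *m Q2b.
have hUU : U *m U^T = P.
  rewrite /U /P linearD /= !trmx_mul !trmxK mulmxDl !mulmxDr.
  rewrite -!mulmxA !(mulmxA Q1a) !(mulmxA Q1b) o1a o1b z1 z1'.
  by rewrite !mul1mx !mul0mx !mulmx0 addr0 add0r.
have Pa : Q2a *m P = Q2a by rewrite /P mulmxDr !mulmxA o2a z2 mul1mx mul0mx addr0.
have Pb : Q2b *m P = Q2b by rewrite /P mulmxDr !mulmxA o2b z2' mul1mx mul0mx add0r.
have hx : forall x : 'rV_n, x *m P = x.
  move=> x; have : (x <= Q2a + Q2b)%MS.
    apply: submx_trans (addsmxS t2a t2b); apply: submx_full; exact: full_ortho.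
  move/sub_addsmxP => [[c1 c2] /= ->].
  by rewrite mulmxDl -!mulmxA Pa Pb.
have P1 : P = 1%:M.
  by apply/row_matrixP => i; rewrite -[P]mul1mx row_mul hx.
have oU : orthogonal_mx U by rewrite /orthogonal_mx hUU P1.
exists U; split => //; apply: transport => // x.
  move=> hx2; have : (x <= Q2a)%MS by apply: submx_trans hx2 t2a.
  move/submxP => [D ->]; rewrite -mulmxA Ua.
  by apply: submx_trans s1a; apply: submxMl.
move=> hx2; have : (x <= Q2b)%MS by apply: submx_trans hx2 t2b.
move/submxP => [D ->]; rewrite -mulmxA Ub.
by apply: submx_trans s1b; apply: submxMl.
Qed.

Unset Implicit Arguments.
Set Strict Implicit.

Theorem proposition1p2 (R : realType) (n : nat) (H1 H2 : 'M[R]_n) :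
  congruent (h4 H1) (h4 H2) <->
  (\rank H1 = \rank H2 \/ \rank H1 = (n - \rank H2)%N).
Proof.
split; first exact: necessity.
case=> hr.
  have [U [oU e]] := same_rank_cong hr.
  by exists U, 1; split => //; split; [left | move=> x; rewrite mul1r e].
have hr' : \rank (kermx H1^T) = \rank H2.
  rewrite rank_ker hr subKn //; exact: rank_leq_col.
have [U [oU e]] := same_rank_cong hr'.
exists U, 1; split => //; split; first by left.
by move=> x; rewrite mul1r e; exact: h4_compl.
Qed.
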